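(* Assume the setting described in the context. Let $P$ and $P'$ be p-matrices with $P'\subset P$, with columns $I_1,\dots,I_{p+q+2}$ and $J_1,\dots,J_{p+q+2}$ respectively, such that for every column $i$ the column $J_i$ is nested in $I_i$ in the sense described in the context, and let $K_i,L_i$ be as defined there. For $j=1,\dots,p+q+2$ form the p-matrices $(J_1,\dots,J_{j-1},K_j,I_{j+1},\dots,I_{p+q+2})$ and $(J_1,\dots,J_{j-1},L_j,I_{j+1},\dots,I_{p+q+2})$. Then these $2(p+q+2)$ p-matrices (of which the empty ones may be discarded) are pairwise disjoint, and their union is $P\setminus P'$.
   Context: $\mathbb N=\{0,1,2,\dots\}$. For $a\in\mathbb Z$, $b\in\mathbb Z\cup\{\infty\}$, $[a,b]=\{j\in\mathbb N:a\le j\le b\}$ (with $j<\infty$ if $b=\infty$). A p-matrix with data $\mathbf a\in\mathbb Z^p$, $\mathbf b\in(\mathbb Z\cup\{\infty\})^p$, $\mathbf c\in\mathbb Z^q$, $\mathbf d\in(\mathbb Z\cup\{\infty\})^q$, integer-valued functions $E,F$ on the block $[\mathbf a,\mathbf b]=\prod[a_i,b_i]$ and $G,H$ on $[\mathbf c,\mathbf d]=\prod[c_j,d_j]$, is the set $\{(\mathbf k;\boldsymbol\ell;s)\in\mathbb N^{p+q+1}:\mathbf k\in[\mathbf a,\mathbf b],\boldsymbol\ell\in[\mathbf c,\mathbf d],s\in[E(\mathbf k),F(\mathbf k)]\cap[G(\boldsymbol\ell),H(\boldsymbol\ell)]\}$. Its columns are: $I_i=[a_i,b_i]$ for $i\le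 p$ (constraint on $k_i$), $I_{p+j}=[c_j,d_j]$ for $j\le q$ (constraint on $\ell_j$), $I_{p+q+1}$ = the interval-valued function $\mathbf k\mapsto[E(\mathbf k),F(\mathbf k)]$ and $I_{p+q+2}$ = the function $\boldsymbol\ell\mapsto[G(\boldsymbol\ell),H(\boldsymbol\ell)]$ (constraints on $s$). A p-matrix is written as the tuple of its columns, and conversely any such tuple (integer intervals in the first $p+q$ positions, interval-valued functions of $\mathbf k$ resp. $\boldsymbol\ell$ in the last two, each defined on the block given by the corresponding first columns) defines a p-matrix. Nesting: for an integer-interval column $I_i=[u,v]$, $J_i=[u',v']$, nesting means $u\le u'\le v'+1\le v+1$ (with $\infty+1=\infty$); then $K_i=[u,u'-1]$ and $L_i=[v'+1,v]$ (empty if $v'=v=\infty$). For the $s$-columns nesting means this pointwise: $E(\mathbf k)\le E'(\mathbf k)\le F'(\mathbf k)+1\le F(\mathbf k)+1$ for every $\mathbf k$ in the $\mathbf k$-block of $P'$ (and likewise for $G,H$ versus $G',H'$ on the $\boldsymbol\ell$-block of $P'$), and $K_{p+q+1}$ is $\mathbf k\mapsto[E(\mathbf k),E'(\mathbf k)-1]$, $L_{p+q+1}$ is $\mathbf k\mapsto[F'(\mathbf k)+1,F(\mathbf k)]$, similarly for column $p+q+2$. Under nesting, $I_i\setminus J_i=K_i\sqcup L_i$. *)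

(* Defs.v *)
From mathcomp Require Import all_boot all_order all_algebra.
Set Implicit Arguments. Unset Strict Implicit. Unset Printing Implicit Defensive.
Import Order.TTheory GRing.Theory Num.Theory.
Local Open Scope ring_scope.

(* An integer interval [lo, hi] with lo in Z and hi in Z ∪ {∞} (None = ∞),
   viewed as a set of natural numbers j with lo <= j <= hi. *)
Record interval := Itv { lo : int; hi : option int }.

Definition in_itv (I : interval) (j : nat) : Prop :=
  lo I <= j%:Z /\ (forall h, hi I = Some h -> j%:Z <= h).

(* A p-matrix: integer-interval columns for k (p of them) and l (q of them),
   and the two s-columns k |-> [E k, F k] and l |-> [G l, H l]
   (given as total functions; only their values on the blocks matter). *)
Record pmat (p q : nat) := PMat {
  kcol : 'I_p -> interval;
  lcol : 'I_q -> interval;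
  ecol : ('I_p -> nat) -> int * int;
  gcol : ('I_q -> nat) -> int * int
}.

Definition in_kblock p q (P : pmat p q) (k : 'I_p -> nat) : Prop :=
  forall i, in_itv (kcol P i) (k i).
Definition in_lblock p q (P : pmat p q) (l : 'I_q -> nat) : Prop :=
  forall j, in_itv (lcol P j) (l j).

Definition in_s (EF : int * int) (s : nat) : Prop := EF.1 <= s%:Z <= EF.2.

Definition pmem p q (P : pmat p q) (k : 'I_p -> nat) (l : 'I_q -> nat) (s : nat)
  : Prop :=
  [/\ in_kblock P k, in_lblock P l, in_s (ecol P k) s & in_s (gcol P l) s].

(* Nesting of integer intervals J = [u', v'] in I = [u, v]:
   u <= u' <= v' + 1 <= v + 1  (with ∞ + 1 = ∞). *)
Definition nested_itv (I J : interval) : Prop :=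
  [/\ lo I <= lo J,
      (forall v', hi J = Some v' -> lo J <= v' + 1) &
      (match hi I, hi J with
       | None, _ => True
       | Some v, Some v' => v' <= v
       | Some _, None => False
       end)].

Definition Kitv (I J : interval) : interval := Itv (lo I) (Some (lo J - 1)).
(* L = [v' + 1, v], empty when v' = v = ∞ (encoded as [1, 0]). *)
Definition Litv (I J : interval) : interval :=
  match hi J with
  | Some v' => Itv (v' + 1) (hi I)
  | None => Itv 1 (Some 0)
  end.

Definition nested_s (EF EF' : int * int) : Prop :=
  EF.1 <= EF'.1 /\ EF'.1 <= EF'.2 + 1 /\ EF'.2 + 1 <= EF.2 + 1.

Definition Ks (EF EF' : int * int) : int * int := (EF.1, EF'.1 - 1).
Definition Ls (EF EF' : int * int) : int * int := (EF'.2 + 1, EF.2).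

(* Column selector: column number i (0-based) compared with j:
   i < j -> J_i (from P'), i = j -> the new column, i > j -> I_i (from P). *)
Definition pick T (i j : nat) (Jc X Ic : T) : T :=
  if (i < j)%N then Jc else if i == j then X else Ic.

(* Columns are numbered
   0-based: 0..p-1 are the k-columns, p..p+q-1 the l-columns, p+q the
   (E,F)-column and p+q+1 the (G,H)-column. *)
Definition hybrid p q (P P' : pmat p q) (j : 'I_(p + q + 2)) (b : bool)
  : pmat p q :=
  PMat
    (fun i => pick i j (kcol P' i)
        ((if b then Kitv else Litv) (kcol P i) (kcol P' i)) (kcol P i))
    (fun i => pick (p + i) j (lcol P' i)
        ((if b then Kitv else Litv) (lcol P i) (lcol P' i)) (lcol P i))
    (fun k => pick (p + q) j (ecol P' k)
        ((if b then Ks else Ls) (ecol P k) (ecol P' k)) (ecol P k))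
    (fun l => pick (p + q + 1) j (gcol P' l)
        ((if b then Ks else Ls) (gcol P l) (gcol P' l)) (gcol P l)).

(* Main.v *)
Require Import Defs.
From mathcomp Require Import all_boot all_order all_algebra zify.
From Stdlib Require Import Classical.
Import Defs.
Set Implicit Arguments. Unset Strict Implicit.
Import Order.TTheory GRing.Theory Num.Theory.
Local Open Scope ring_scope.

Section Itv.
Variables (I J : interval) (x : nat).
Hypothesis N : nested_itv I J.

Lemma itvA : in_itv J x -> in_itv I x.
Proof.
case: I J N => [u v] [u' v']; rewrite /nested_itv /in_itv /=.
case=> h1 h2 h3 [g1 g2]; split; first lia.
move=> h Hv; subst v; case: v' h2 h3 g2 => [v'|] //= h2 h3 g2.
have := g2 v' erefl; lia.
Qed.

Lemma itvK : in_itv (Kitv I J) x -> in_itv I x /\ ~ in_itv J x.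
Proof.
case: I J N => [u v] [u' v']; rewrite /nested_itv /in_itv /=.
case=> h1 h2 h3 [g1 g2]; have g := g2 _ erefl; split; last by case; lia.
split => // h Hv; subst v; case: v' h2 h3 => [v'|] //= h2 h3.
have := h2 v' erefl; lia.
Qed.

Lemma itvL : in_itv (Litv I J) x -> in_itv I x /\ ~ in_itv J x.
Proof.
case: I J N => [u v] [u' v']; rewrite /nested_itv /Litv /in_itv /=.
case=> h1 h2 h3; case: v' h2 h3 => [v'|] h2 h3 /= [g1 g2].
  split; last by case=> _ /(_ v' erefl); lia.
  split => //; have := h2 v' erefl; lia.
have := g2 0 erefl; lia.
Qed.

Lemma itvD : in_itv I x -> ~ in_itv J x ->
  in_itv (Kitv I J) x \/ in_itv (Litv I J) x.
Proof.
case: I J N => [u v] [u' v']; rewrite /nested_itv /Litv /Kitv /in_itv /=.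
case=> h1 h2 h3 [g1 g2] nJ.
have [hx|hx] := boolP (x%:Z < u').
  left; split => // h [<-]; lia.
right; case: v' h2 h3 nJ => [v'|] h2 h3 nJ.
  split => //; rewrite /=; case: (boolP (v' < x%:Z)) => H; first lia.
  exfalso; apply: nJ; split; first lia. by move=> h [<-]; lia.
exfalso; apply: nJ; split; first lia. by [].
Qed.

Lemma itvE : in_itv (Kitv I J) x -> in_itv (Litv I J) x -> False.
Proof.
case: I J N => [u v] [u' v']; rewrite /nested_itv /Litv /Kitv /in_itv /=.
case=> h1 h2 h3 [_ g]; have := g _ erefl.
case: v' h2 h3 => [v'|] h2 h3 /=; last by move=> _ [? /(_ 0 erefl)]; lia.
have := h2 v' erefl; move=> ? ? [? ?]; lia.
Qed.
End Itv.

Section S.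
Variables (EF EF' : int * int) (x : nat).
Hypothesis N : nested_s EF EF'.

Lemma sA : in_s EF' x -> in_s EF x.
Proof. case: EF EF' N => [a b] [a' b']; rewrite /nested_s /in_s /=; lia. Qed.
Lemma sK : in_s (Ks EF EF') x -> in_s EF x /\ ~ in_s EF' x.
Proof. case: EF EF' N => [a b] [a' b']; rewrite /nested_s /in_s /Ks /=.
move=> H1 H2; split; [lia| move=> H3; lia]. Qed.
Lemma sL : in_s (Ls EF EF') x -> in_s EF x /\ ~ in_s EF' x.
Proof. case: EF EF' N => [a b] [a' b']; rewrite /nested_s /in_s /Ls /=.
move=> H1 H2; split; [lia| move=> H3; lia]. Qed.
Lemma sD : in_s EF x -> ~ in_s EF' x -> in_s (Ks EF EF') x \/ in_s (Ls EF EF') x.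
Proof. case: EF EF' N => [a b] [a' b']; rewrite /nested_s /in_s /Ls /Ks /=.
move=> H1 H2 H3. case: (boolP (x%:Z < a')) => H; [left|right]; lia. Qed.
Lemma sE : in_s (Ks EF EF') x -> in_s (Ls EF EF') x -> False.
Proof. case: EF EF' N => [a b] [a' b']; rewrite /nested_s /in_s /Ls /Ks /=; lia. Qed.
End S.
Local Close Scope ring_scope.

Section Cols.
Variables (p q : nat).
Implicit Types (T : pmat p q) (k : 'I_p -> nat) (l : 'I_q -> nat) (s c : nat).

Definition colT T c k l s : Prop :=
  [/\ (forall i : 'I_p, nat_of_ord i = c -> in_itv (kcol T i) (k i)),
      (forall i : 'I_q, (p + i)%N = c -> in_itv (lcol T i) (l i)),
      (c = p + q)%N -> in_s (ecol T k) s &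
      (c = p + q + 1)%N -> in_s (gcol T l) s].

Definition allX (P P' : pmat p q) (b : bool) : pmat p q :=
  PMat (fun i => (if b then Kitv else Litv) (kcol P i) (kcol P' i))
       (fun i => (if b then Kitv else Litv) (lcol P i) (lcol P' i))
       (fun k => (if b then Ks else Ls) (ecol P k) (ecol P' k))
       (fun l => (if b then Ks else Ls) (gcol P l) (gcol P' l)).

Lemma pmem_col T k l s : pmem T k l s <-> forall c, colT T c k l s.
Proof.
split.
  case=> H1 H2 H3 H4 c; split => [i _|i _|_|_]; [exact: H1|exact: H2|by []|by []].
move=> H; split.
- by move=> i; case: (H i) => /(_ i erefl).
- by move=> i; case: (H (p + i)%N) => _ /(_ i erefl).
- by case: (H (p + q)%N) => _ _ /(_ erefl).
- by case: (H (p + q + 1)%N) => _ _ _ /(_ erefl).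
Qed.

Lemma colT_hyb P P' (j : 'I_(p + q + 2)) b c k l s :
  colT (hybrid P P' j b) c k l s <->
  (if (c < j)%N then colT P' c k l s
   else if c == j then colT (allX P P' b) c k l s else colT P c k l s).
Proof.
rewrite /colT /hybrid /pick /=.
case: (boolP (c < j)%N) => h1; [|case: (boolP (c == j)) => h2].
all: rewrite ?h1 ?h2 ?(negbTE h1) ?(negbTE h2).
all: split; (case=> H1 H2 H3 H4; split => [i Hi|i Hi|Hi|Hi];
  [move: (H1 i Hi)|move: (H2 i Hi)|move: (H3 Hi)|move: (H4 Hi)]).
all: by subst c; rewrite ?h1 ?h2 ?(negbTE h1) ?(negbTE h2); exact id.
Qed.
End Cols.

Section C.
Variables (p q : nat) (P P' : pmat p q) (k : 'I_p -> nat) (l : 'I_q -> nat) (s : nat).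
Implicit Types (T : pmat p q) (c : nat).

Lemma colT_k T (i : 'I_p) c : nat_of_ord i = c -> colT T c k l s <-> in_itv (kcol T i) (k i).
Proof.
move=> Hi; split; first by case=> /(_ i Hi).
move=> H; split.
- by move=> i' Hi'; have -> : i' = i by apply: val_inj; rewrite /= Hi Hi'.
- move=> i' Hi'; have := ltn_ord i; lia.
- move=> Hc; have := ltn_ord i; lia.
- move=> Hc; have := ltn_ord i; lia.
Qed.

Lemma colT_l T (i : 'I_q) c : (p + i)%N = c -> colT T c k l s <-> in_itv (lcol T i) (l i).
Proof.
move=> Hi; split; first by case=> _ /(_ i Hi).
move=> H; split.
- move=> i' Hi'; have := ltn_ord i'; lia.
- move=> i' Hi'; have -> : i' = i by apply: val_inj => /=; lia.
  exact H.
- move=> Hc; have := ltn_ord i; lia.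
- move=> Hc; have := ltn_ord i; lia.
Qed.

Lemma colT_e T c : c = (p + q)%N -> colT T c k l s <-> in_s (ecol T k) s.
Proof.
move=> Hc; split; first by case=> _ _ /(_ Hc).
move=> H; split => //.
- move=> i' Hi'; have := ltn_ord i'; lia.
- move=> i' Hi'; have := ltn_ord i'; lia.
- lia.
Qed.

Lemma colT_g T c : c = (p + q + 1)%N -> colT T c k l s <-> in_s (gcol T l) s.
Proof.
move=> Hc; split; first by case=> _ _ _ /(_ Hc).
move=> H; split => //.
- move=> i' Hi'; have := ltn_ord i'; lia.
- move=> i' Hi'; have := ltn_ord i'; lia.
- lia.
Qed.

Lemma colT_big T c : (p + q + 2 <= c)%N -> colT T c k l s.
Proof.
move=> Hc; split.
- move=> i' Hi'; have := ltn_ord i'; lia.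
- move=> i' Hi'; have := ltn_ord i'; lia.
- lia.
- lia.
Qed.

Lemma col_cases c : (c < p + q + 2)%N ->
  (exists i : 'I_p, nat_of_ord i = c) \/ (exists i : 'I_q, (p + i)%N = c) \/
  c = (p + q)%N \/ c = (p + q + 1)%N.
Proof.
move=> Hc; case: (ltnP c p) => h1.
  by left; exists (Ordinal h1).
case: (ltnP c (p + q)) => h2.
  have h : (c - p < q)%N by lia.
  right; left; exists (Ordinal h) => /=; lia.
right; right; lia.
Qed.

Hypotheses (HI : forall i, nested_itv (kcol P i) (kcol P' i))
  (HL : forall i, nested_itv (lcol P i) (lcol P' i))
  (HE : forall k, in_kblock P' k -> nested_s (ecol P k) (ecol P' k))
  (HG : forall l, in_lblock P' l -> nested_s (gcol P l) (gcol P' l)).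

Variable c : nat.
Hypotheses (Hc : (c < p + q + 2)%N) (Hprev : forall c', (c' < c)%N -> colT P' c' k l s).

Lemma kbl : c = (p + q)%N \/ c = (p + q + 1)%N -> in_kblock P' k.
Proof.
move=> H i; apply/(colT_k P' (erefl (nat_of_ord i))); apply: Hprev.
have := ltn_ord i; lia.
Qed.

Lemma lbl : c = (p + q + 1)%N -> in_lblock P' l.
Proof.
move=> H i; apply/(colT_l P' (erefl (p + i)%N)); apply: Hprev.
have := ltn_ord i; lia.
Qed.

Lemma colA : colT P' c k l s -> colT P c k l s.
Proof.
case: (col_cases Hc) => [[i Hi]|[[i Hi]|[H|H]]].
- rewrite !(colT_k _ Hi); exact: itvA.
- rewrite !(colT_l _ Hi); exact: itvA.
- rewrite !(colT_e _ H); apply: sA; apply: HE; apply: kbl; tauto.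
- rewrite !(colT_g _ H); apply: sA; apply: HG; exact: lbl.
Qed.

Lemma colB b : colT (allX P P' b) c k l s -> colT P c k l s /\ ~ colT P' c k l s.
Proof.
case: (col_cases Hc) => [[i Hi]|[[i Hi]|[H|H]]].
- rewrite !(colT_k _ Hi) /=; case: b; [exact: itvK|exact: itvL].
- rewrite !(colT_l _ Hi) /=; case: b; [exact: itvK|exact: itvL].
- rewrite !(colT_e _ H) /=; have N := HE (kbl (or_introl H)).
  case: b; [exact: sK|exact: sL].
- rewrite !(colT_g _ H) /=; have N := HG (lbl H).
  case: b; [exact: sK|exact: sL].
Qed.

Lemma colD : colT P c k l s -> ~ colT P' c k l s ->
  exists b, colT (allX P P' b) c k l s.
Proof.
case: (col_cases Hc) => [[i Hi]|[[i Hi]|[H|H]]].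
- rewrite !(colT_k _ Hi) => H1 H2; case: (itvD (HI i) H1 H2) => ?; [exists true|exists false];
  by rewrite (colT_k _ Hi).
- rewrite !(colT_l _ Hi) => H1 H2; case: (itvD (HL i) H1 H2) => ?; [exists true|exists false];
  by rewrite (colT_l _ Hi).
- rewrite !(colT_e _ H) => H1 H2; case: (sD (HE (kbl (or_introl H))) H1 H2) => ?;
  [exists true|exists false]; by rewrite (colT_e _ H).
- rewrite !(colT_g _ H) => H1 H2; case: (sD (HG (lbl H)) H1 H2) => ?;
  [exists true|exists false]; by rewrite (colT_g _ H).
Qed.

Lemma colE : colT (allX P P' true) c k l s -> colT (allX P P' false) c k l s -> False.
Proof.
case: (col_cases Hc) => [[i Hi]|[[i Hi]|[H|H]]].
- rewrite !(colT_k _ Hi); exact: itvE.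
- rewrite !(colT_l _ Hi); exact: itvE.
- rewrite !(colT_e _ H); exact: sE (HE (kbl (or_introl H))).
- rewrite !(colT_g _ H); exact: sE (HG (lbl H)).
Qed.
End C.

Lemma hyb_iff p q (P P' : pmat p q) j b k l s :
  pmem (hybrid P P' j b) k l s <->
  [/\ forall c, (c < j)%N -> colT P' c k l s,
      colT (allX P P' b) j k l s &
      forall c, (j < c)%N -> colT P c k l s].
Proof.
rewrite pmem_col; split.
  move=> H; split.
  - by move=> c hc; move: (H c); rewrite colT_hyb hc.
  - by move: (H j); rewrite colT_hyb ltnn eqxx.
  - move=> c hc; move: (H c); rewrite colT_hyb.
    by rewrite ltnNge (ltnW hc) /= gtn_eqF.
case=> H1 H2 H3 c; rewrite colT_hyb.
case: ltngtP => h; [exact: H1|exact: H3|].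
by rewrite h.
Qed.

Theorem theorem14p2 (p q : nat) (P P' : pmat p q) :
  (forall k l s, pmem P' k l s -> pmem P k l s) ->
  (forall i, nested_itv (kcol P i) (kcol P' i)) ->
  (forall i, nested_itv (lcol P i) (lcol P' i)) ->
  (forall k, in_kblock P' k -> nested_s (ecol P k) (ecol P' k)) ->
  (forall l, in_lblock P' l -> nested_s (gcol P l) (gcol P' l)) ->
  (forall (j1 j2 : 'I_(p + q + 2)) (b1 b2 : bool) k l s,
      pmem (hybrid P P' j1 b1) k l s -> pmem (hybrid P P' j2 b2) k l s ->
      j1 = j2 /\ b1 = b2) /\
  (forall k l s,
      (exists (j : 'I_(p + q + 2)) (b : bool), pmem (hybrid P P' j b) k l s)
      <-> (pmem P k l s /\ ~ pmem P' k l s)).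
Proof.
move=> Hsub HI HL HE HG; split.
  move=> j1 j2 b1 b2 k l s /hyb_iff [A1 B1 C1] /hyb_iff [A2 B2 C2].
  case: (ltngtP j1 j2) => h.
  - exfalso; case: (colB HI HL HE HG (ltn_ord j1) A1 B1) => _; apply; exact: A2 h.
  - exfalso; case: (colB HI HL HE HG (ltn_ord j2) A2 B2) => _; apply; exact: A1 h.
  - have e : j1 = j2 by apply: val_inj.
    split => //; subst j2.
    case: b1 b2 B1 B2 => [] [] // B1 B2; exfalso.
    + exact: (colE HI HL HE HG (ltn_ord j1) A1 B1 B2).
    + exact: (colE HI HL HE HG (ltn_ord j1) A1 B2 B1).
move=> k l s; split.
  case=> j [b /hyb_iff [A B C]].
  have [BP BN] := colB HI HL HE HG (ltn_ord j) A B.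
  split.
    apply/pmem_col => c.
    case: (ltngtP c j) => h.
    - apply: (colA HI HL HE HG (c := c)); first by have := ltn_ord j; lia.
        by move=> c' hc'; apply: A; lia.
      exact: A.
    - exact: C.
    - by rewrite h.
  by move/pmem_col => /(_ j).
case=> HP HN.
have key : forall n, (forall c, (c < n)%N -> colT P' c k l s) \/
  exists c, [/\ (c < n)%N, forall c', (c' < c)%N -> colT P' c' k l s & ~ colT P' c k l s].
  elim=> [|n [IH|IH]]; first by left.
  - case: (classic (colT P' n k l s)) => hn.
      by left => c hc; case: (ltngtP c n) => h; [exact: IH| lia | rewrite h].
    by right; exists n; split.
  - by right; case: IH => c [h1 h2 h3]; exists c; split => //; lia.
case: (key (p + q + 2)%N) => [H|[c [h1 h2 h3]]].
  exfalso; apply: HN; apply/pmem_col => c.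
  case: (ltnP c (p + q + 2)) => hc; [exact: H|exact: colT_big].
have [b Hb] := colD HI HL HE HG h1 h2 (proj1 (pmem_col _ _ _ _) HP c) h3.
exists (Ordinal h1), b; apply/hyb_iff; split => //.
by move=> c' _; move: HP => /pmem_col.
Qed.
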